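(* Let $G$ be a connected equimatchable graph. Then $G-v$ and $G\setminus e$ are equimatchable for all $v\in V(G)$ and all $e\in E(G)$ if and only if $G$ is either a complete graph on an odd number of vertices or a bipartite edge-stable equimatchable graph.
   Context: All graphs are finite and simple. A graph is equimatchable if all its maximal matchings have the same cardinality. $G\setminus e$ denotes the graph obtained by deleting the edge $e$ (keeping all vertices). An equimatchable graph $G$ is edge-stable if $G\setminus e$ is equimatchable for every $e\in E(G)$. *)

(* Defs.v *)
(* A simple graph is a symmetric irreflexive relation
   e : rel T on a finType T.  Subgraphs induced on a vertex set V : {set T}
   are handled by passing V explicitly. *)
From mathcomp Require Import all_boot.
Set Implicit Arguments. Unset Strict Implicit. Unset Printing Implicit Defensive.

Section Graphs.
Variable T : finType.

Definition simple_graph (e : rel T) : Prop := symmetric e /\ irreflexive e.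

Definition is_edge (V : {set T}) (e : rel T) (s : {set T}) : bool :=
  [exists x, exists y,
     [&& s == [set x; y], x != y, x \in V, y \in V & e x y]].

Definition matching (V : {set T}) (e : rel T) (M : {set {set T}}) : bool :=
  [forall s in M, is_edge V e s] &&
  [forall s in M, forall t in M, (s != t) ==> [disjoint s & t]].

Definition maximal_matching (V : {set T}) (e : rel T) (M : {set {set T}}) : bool :=
  matching V e M &&
  [forall s, (is_edge V e s && (s \notin M)) ==> ~~ matching V e (s |: M)].

Definition equimatchable (V : {set T}) (e : rel T) : Prop :=
  forall M N : {set {set T}},
    maximal_matching V e M -> maximal_matching V e N -> #|M| = #|N|.

Definition del_edge (e : rel T) (x y : T) : rel T :=
  fun u v => e u v && ~~ (((u == x) && (v == y)) || ((u == y) && (v == x))).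

Definition edge_stable (V : {set T}) (e : rel T) : Prop :=
  equimatchable V e /\
  forall x y, x \in V -> y \in V -> e x y -> equimatchable V (del_edge e x y).

Definition connected (V : {set T}) (e : rel T) : Prop :=
  forall x y, x \in V -> y \in V ->
    connect (fun u v => [&& u \in V, v \in V & e u v]) x y.

Definition complete_odd (V : {set T}) (e : rel T) : Prop :=
  odd #|V| /\ (forall x y, x \in V -> y \in V -> x != y -> e x y).

Definition bipartite (V : {set T}) (e : rel T) : Prop :=
  exists A : {set T}, A \subset V /\
    forall x y, x \in V -> y \in V -> e x y -> (x \in A) != (y \in A).

End Graphs.

(* Main.v *)
Require Import Defs.
From mathcomp Require Import all_boot.
Set Implicit Arguments. Unset Strict Implicit. Unset Printing Implicit Defensive.


Section Gen.
Variable T : finType.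
Variables (V : {set T}) (e : rel T).
Hypothesis eirr : irreflexive e.
Implicit Types (M N : {set {set T}}) (s t : {set T}).

Definition cov (M : {set {set T}}) x := [exists s in M, x \in s].

Lemma covP (M : {set {set T}}) x : reflect (exists2 s, s \in M & x \in s) (cov M x).
Proof.
apply: (iffP existsP) => [[s /andP[]]|[s h1 h2]]; first by exists s.
by exists s; rewrite h1 h2.
Qed.

Lemma set2_eq (x y a b : T) : [set x; y] = [set a; b] ->
  (x = a /\ y = b) \/ (x = b /\ y = a).
Proof.
move=> E.
have xin : x \in [set a; b] by rewrite -E set21.
have yin : y \in [set a; b] by rewrite -E set22.
have ain : a \in [set x; y] by rewrite E set21.
have bin : b \in [set x; y] by rewrite E set22.
case/set2P: xin => xa; case/set2P: yin => yb; subst; auto.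
- by case/set2P: bin => ->; auto.
- by case/set2P: ain => ->; auto.
Qed.

Lemma is_edgeP s : is_edge V e s ->
  exists x y, s = [set x; y] /\ [/\ x != y, x \in V, y \in V & e x y].
Proof.
case/existsP=> x /existsP[y /and5P[/eqP-> h1 h2 h3 h4]].
by exists x, y.
Qed.

Lemma is_edgeI x y : x != y -> x \in V -> y \in V -> e x y -> is_edge V e [set x; y].
Proof.
move=> h1 h2 h3 h4; apply/existsP; exists x; apply/existsP; exists y.
by rewrite eqxx h1 h2 h3 h4.
Qed.

Lemma matching_edge M s : matching V e M -> s \in M -> is_edge V e s.
Proof. by case/andP=> /forall_inP H _ /H. Qed.

Lemma matching_disj M s t u : matching V e M -> s \in M -> t \in M ->
  u \in s -> u \in t -> s = t.
Proof.
case/andP=> _ /forall_inP H sM tM us ut; apply/eqP; apply: contraT => st.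
have := H s sM; move/forall_inP/(_ t tM); rewrite st /= => /disjoint_setI0 E.
have : u \in s :&: t by rewrite inE us ut.
by rewrite E inE.
Qed.

Lemma matching_intro M : (forall s, s \in M -> is_edge V e s) ->
  (forall s t u, s \in M -> t \in M -> u \in s -> u \in t -> s = t) ->
  matching V e M.
Proof.
move=> H1 H2; apply/andP; split; first by apply/forall_inP.
apply/forall_inP=> s sM; apply/forall_inP=> t tM; apply/implyP=> st.
rewrite -setI_eq0; apply/eqP/setP=> u; rewrite !inE.
apply/negbTE; apply/negP=> /andP[us ut].
by move: st; rewrite (H2 s t u) ?eqxx.
Qed.

Lemma matchingD M s : matching V e M -> matching V e (M :\ s).
Proof.
move=> mM; apply: matching_intro => [t|t t' u].
  by rewrite inE => /andP[_]; apply: matching_edge.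
rewrite !inE => /andP[_ h1] /andP[_ h2]; exact: (matching_disj mM).
Qed.

Lemma covD M s u : matching V e M -> s \in M ->
  cov (M :\ s) u = cov M u && (u \notin s).
Proof.
move=> mM sM; apply/covP/andP.
  case=> t; rewrite inE => /andP[ts tM] ut; split; first by apply/covP; exists t.
  by apply/negP=> us; move: ts; rewrite (matching_disj mM tM sM ut us) inE eqxx.
case=> /covP[t tM ut] us; exists t => //; rewrite inE tM andbT.
by rewrite inE; apply: contraNneq us => <-.
Qed.

Lemma covU M s u : cov (s |: M) u = (u \in s) || cov M u.
Proof.
apply/covP/orP.
  by case=> t; rewrite in_setU1 => /orP[/eqP->|tM ut]; [left|right; apply/covP; exists t].
case=> [us|/covP[t tM ut]]; first by exists s; rewrite ?setU11.
by exists t; rewrite // in_setU1 tM orbT.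
Qed.

Lemma cov_edge M x y : [set x; y] \in M -> cov M x && cov M y.
Proof.
by move=> H; apply/andP; split; apply/covP; exists [set x; y]; rewrite ?set21 ?set22.
Qed.

Lemma notcov_notin M x y : ~~ cov M x -> [set x; y] \notin M.
Proof. by apply: contra => /cov_edge/andP[]. Qed.

Lemma matchingU M x y : matching V e M -> x != y -> x \in V -> y \in V -> e x y ->
  ~~ cov M x -> ~~ cov M y -> matching V e ([set x; y] |: M).
Proof.
move=> mM xy xV yV exy cx cy; apply: matching_intro => [s|s t u].
  rewrite in_setU1 => /orP[/eqP->|]; [exact: is_edgeI| exact: matching_edge].
have H : forall s u, s \in M -> u \in s -> u \in [set x; y] -> False.
  move=> s' u' sM us' /set2P[] E; [move/negP: cx|move/negP: cy]; apply;
  apply/covP; by exists s'; rewrite // -E.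
rewrite !in_setU1 => /orP[/eqP->|sM] /orP[/eqP->|tM] // us ut.
- by case: (H t u tM ut us).
- by case: (H s u sM us ut).
- exact: (matching_disj mM) us ut.
Qed.

Lemma cardU2 M x y : ~~ cov M x -> #|[set x; y] |: M| = #|M|.+1.
Proof. by move=> h; rewrite cardsU1 (notcov_notin y h). Qed.

Lemma cardD2 M s : s \in M -> #|M| = #|M :\ s|.+1.
Proof. by move=> h; rewrite (cardsD1 s M) h. Qed.

Lemma maximalP M : maximal_matching V e M <->
  matching V e M /\ (forall x y, x \in V -> y \in V -> e x y -> cov M x || cov M y).
Proof.
split.
  case/andP=> mM /forallP H; split=> // x y xV yV exy.
  apply: contraT => /norP[cx cy].
  have xy : x != y by apply/negP=> /eqP xy; move: exy; rewrite xy eirr.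
  move: (H [set x; y]); rewrite is_edgeI //= (notcov_notin y cx) /=.
  by rewrite matchingU.
case=> mM H; apply/andP; split=> //; apply/forallP=> s; apply/implyP.
case/andP=> /is_edgeP[x [y [-> [xy xV yV exy]]]] sM.
apply/negP=> mU.
case/orP: (H x y xV yV exy) => /covP[t tM ut].
- have := matching_disj mU (setU11 _ _) (setU1r _ tM) (set21 x y) ut.
  by move=> E; move: sM; rewrite E tM.
- have := matching_disj mU (setU11 _ _) (setU1r _ tM) (set22 x y) ut.
  by move=> E; move: sM; rewrite E tM.
Qed.

Lemma extend M : matching V e M -> exists N, maximal_matching V e N /\ M \subset N.
Proof.
move=> mM; move: {2}#|~: M| (leqnn #|~: M|) => n; elim: n M mM => [|n IH] M mM Hn.
all: case Mx : (maximal_matching V e M); first by exists M.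
all: move: Mx; rewrite /maximal_matching mM /= => /negbT; rewrite negb_forall.
all: case/existsP=> s; rewrite negb_imply negbK => /andP[/andP[se sM] ms].
  have : s \in ~: M by rewrite inE.
  by move: Hn; rewrite leqn0 cards_eq0 => /eqP ->; rewrite inE.
have [N [H1 H2]] : exists N, maximal_matching V e N /\ (s |: M) \subset N.
  apply: (IH _ ms).
  have : #|~: (s |: M)| < #|~: M|.
    apply: proper_card; apply/properP; split.
      by apply/subsetP=> u; rewrite !inE negb_or => /andP[].
    by exists s; rewrite !inE ?eqxx.
  by move=> h; rewrite -ltnS; apply: leq_trans h Hn.
by exists N; split=> //; apply: subset_trans H2; apply: subsetUr.
Qed.

Lemma EM_le M N : equimatchable V e -> maximal_matching V e N -> matching V e M ->
  #|M| <= #|N|.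
Proof.
move=> EM mN mM; have [M' [mM' sM]] := extend mM.
by rewrite -(EM _ _ mM' mN); apply: subset_leq_card.
Qed.

Lemma EM_max M N : equimatchable V e -> maximal_matching V e N -> matching V e M ->
  #|M| = #|N| -> maximal_matching V e M.
Proof.
move=> EM mN mM cMN; have [M' [mM' sM]] := extend mM.
suff -> : M = M' by [].
apply/eqP; rewrite eqEcard sM /= cMN (EM _ _ mM' mN) //.
Qed.

Lemma cover_cov M x : (x \in cover M) = cov M x.
Proof.
apply/bigcupP/covP; case=> s h1 h2; by exists s.
Qed.

Lemma card_cover M : matching V e M -> #|cover M| = #|M| * 2.
Proof.
move=> mM; apply: card_uniform_partition; last first.
  apply/and3P; split=> //.
    apply/trivIsetP=> s t sM tM st; rewrite -setI_eq0; apply/eqP/setP=> u.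
    rewrite !inE; apply/negbTE/negP=> /andP[us ut].
    by move: st; rewrite (matching_disj mM sM tM us ut) eqxx.
  apply/negP=> /(matching_edge mM)/is_edgeP[x [y [E _]]].
  have : x \in (set0 : {set T}) by rewrite E set21.
  by rewrite inE.
move=> s /(matching_edge mM)/is_edgeP[x [y [-> [xy _ _ _]]]].
by rewrite cards2 xy.
Qed.

Lemma cover_sub M : matching V e M -> cover M \subset V.
Proof.
move=> mM; apply/subsetP=> u; rewrite cover_cov => /covP[s sM us].
case/is_edgeP: (matching_edge mM sM) => x [y [E [_ xV yV _]]].
by move: us; rewrite E => /set2P[]->.
Qed.

End Gen.

Lemma matching_transfer (T : finType) (V V' : {set T}) (e e' : rel T) M : matching V e M ->
  (forall s, s \in M -> is_edge V' e' s) -> matching V' e' M.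
Proof.
move=> mM H; apply: matching_intro => // s t u; apply: (matching_disj mM).
Qed.


Section Main.
Variables (T : finType) (e : rel T).
Hypothesis esym : symmetric e.
Hypothesis eirr : irreflexive e.
Hypothesis EM : equimatchable [set: T] e.
Implicit Types (M N : {set {set T}}) (s : {set T}).
Local Notation mx := (maximal_matching [set: T] e).
Local Notation mt := (matching [set: T] e).

Lemma mx_mt M : mx M -> mt M. Proof. by case/andP. Qed.

Lemma mx_size M N : mx M -> mx N -> #|M| = #|N|.
Proof. exact: EM. Qed.

Lemma mx_cov M x y : mx M -> e x y -> cov M x || cov M y.
Proof. by case/(maximalP _ eirr)=> _ H exy; apply: H; rewrite ?inE. Qed.

Lemma mx_of_size M N : mx N -> mt M -> #|M| = #|N| -> mx M.
Proof. exact: EM_max. Qed.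

Lemma edge_in M x y : mt M -> [set x; y] \in M -> e x y /\ x != y.
Proof.
move=> mM /(matching_edge mM)/is_edgeP[a [b [E [ab _ _ eab]]]].
case: (set2_eq E) => [[-> ->]|[-> ->]]; split=> //; first by rewrite esym.
by rewrite eq_sym.
Qed.

Lemma partner M x : mt M -> cov M x -> exists y, [set x; y] \in M.
Proof.
move=> mM /covP[s sM xs].
case/is_edgeP: (matching_edge mM sM) => a [b [E _]].
move: xs; rewrite E => /set2P[] ->; first by exists b; rewrite -E.
by exists a; rewrite setUC -E.
Qed.

Lemma partner_uniq M x y z : mt M -> [set x; y] \in M -> [set x; z] \in M -> y = z.
Proof.
move=> mM h1 h2; have E := matching_disj mM h1 h2 (set21 x y) (set21 x z).
have [_ xy] := edge_in mM h1.
case: (set2_eq E) => [[_ ->]|[xz yx]] //.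
by move: xy; rewrite yx xz eqxx.
Qed.

Lemma aug M x y : mx M -> ~~ cov M x -> ~~ cov M y -> e x y -> False.
Proof. by move=> mM cx cy exy; move: (mx_cov mM exy); rewrite (negbTE cx) (negbTE cy). Qed.

Lemma swap M x y z : mx M -> [set x; y] \in M -> e x z -> ~~ cov M z ->
  mx ([set x; z] |: (M :\ [set x; y])) /\
  (forall u, cov ([set x; z] |: (M :\ [set x; y])) u = (u == z) || (cov M u && (u != y))).
Proof.
move=> mM sM exz cz.
have mtM := mx_mt mM.
have [exy xy] := edge_in mtM sM.
have /andP[cx cy] := cov_edge sM.
have xz : x != z by apply: contraNneq cz => <-.
have covf : forall u, cov ([set x; z] |: (M :\ [set x; y])) u = (u == z) || (cov M u && (u != y)).
  move=> u; rewrite covU (covD _ mtM sM) !in_set2 negb_or.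
  case: (u =P x) => [->|/eqP ux] /=; first by rewrite cx xy orbT.
  by [].
split=> //.
apply: (mx_of_size (N := M)) => //.
  apply: matchingU; rewrite ?inE //; first exact: matchingD.
    by rewrite (covD _ mtM sM) set21 andbF.
  by rewrite (covD _ mtM sM) (negbTE cz).
rewrite cardU2; last by rewrite (covD _ mtM sM) set21 andbF.
by rewrite (cardD2 sM).
Qed.

Lemma L1 M x y z t : mx M -> [set x; y] \in M -> ~~ cov M z -> ~~ cov M t ->
  e x z -> e y t -> z = t.
Proof.
move=> mM sM cz ct exz eyt.
have [mM' cf] := swap mM sM exz cz.
have /andP[_ cy] := cov_edge sM.
apply/eqP; apply: contraT => zt.
exfalso; apply: (aug mM' _ _ eyt).
  by rewrite cf eqxx andbF orbF; apply: contraNneq cz => <-.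
by rewrite cf (negbTE ct) andFb orbF eq_sym.
Qed.

Definition Dv v := exists M, mx M /\ ~~ cov M v.

Lemma Dv_swap M x y z : mx M -> [set x; y] \in M -> e x z -> ~~ cov M z -> Dv y.
Proof.
move=> mM sM exz cz; have [mM' cf] := swap mM sM exz cz.
exists ([set x; z] |: (M :\ [set x; y])); split=> //.
rewrite cf eqxx andbF orbF; have /andP[_ cy] := cov_edge sM.
by apply: contraNneq cz => <-.
Qed.

Lemma Dv_unc M v : mx M -> ~~ cov M v -> Dv v.
Proof. by move=> mM cv; exists M. Qed.


Lemma edge_avoid s v : is_edge [set: T] e s -> v \notin s -> is_edge ([set: T] :\ v) e s.
Proof.
case/is_edgeP=> a [b [-> [ab _ _ eab]]] vs.
apply: is_edgeI => //; rewrite !inE andbT.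
- by apply: contraNneq vs => <-; rewrite set21.
- by apply: contraNneq vs => <-; rewrite set22.
Qed.

Lemma L2 (EMv : forall v, equimatchable ([set: T] :\ v) e) v M w :
  Dv v -> mx M -> [set v; w] \in M -> exists z, ~~ cov M z /\ e w z.
Proof.
case=> N [mN cNv] mM sM.
have mtM := mx_mt mM.
have [evw vw] := edge_in mtM sM.
suff /existsP[z /andP[h1 h2]] : [exists z, ~~ cov M z && e w z] by exists z.
apply: contraT; rewrite negb_exists => /forallP H.
have Hw : forall z, e w z -> cov M z.
  by move=> z ewz; move: (H z); rewrite ewz andbT negbK.
set M' := M :\ [set v; w].
have mM' : maximal_matching ([set: T] :\ v) e M'.
  apply/(maximalP _ eirr); split.
    apply: (matching_transfer (matchingD _ mtM)) => s; rewrite in_setD1 => /andP[sv sM'].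
    apply: edge_avoid; first exact: (matching_edge mtM).
    apply/negP=> vs; move: sv.
    by rewrite (matching_disj mtM sM' sM vs (set21 v w)) eqxx.
  move=> x y; rewrite !inE !andbT => xv yv exy.
  rewrite !(covD _ mtM sM) !in_set2 (negbTE xv) (negbTE yv) /=.
  have xy : x != y by apply: contraTneq exy => ->; rewrite eirr.
  case: (x =P w) => [xw|/eqP xw].
    have yw : y != w by rewrite -xw eq_sym.
    by rewrite (Hw y) ?yw ?orbT // -xw.
  case: (y =P w) => [yw|/eqP yw].
    by rewrite (Hw x) // -yw esym.
  by rewrite !andbT; apply: mx_cov.
have mN' : maximal_matching ([set: T] :\ v) e N.
  apply/(maximalP _ eirr); split.
    apply: (matching_transfer (mx_mt mN)) => s sN.
    apply: edge_avoid; first exact: (matching_edge (mx_mt mN)).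
    by apply: contra cNv => vs; apply/covP; exists s.
  by move=> x y _ _ exy; apply: mx_cov.
have := EMv v M' N mM' mN'; rewrite (mx_size mN mM) (cardD2 sM).
by move=> E; exfalso; exact: (n_Sn _ E).
Qed.

Lemma L3 (EMe : forall x y, e x y -> equimatchable [set: T] (del_edge e x y))
  M x y z : mx M -> [set x; y] \in M -> z != y -> e x z ->
  exists u, ~~ cov M u /\ (e x u || e y u).
Proof.
move=> mM sM zy exz.
have mtM := mx_mt mM.
have [exy xy] := edge_in mtM sM.
suff /existsP[u /andP[h1 h2]] : [exists u, ~~ cov M u && (e x u || e y u)] by exists u.
apply: contraT; rewrite negb_exists => /forallP H.
have Hx : forall u, e x u || e y u -> cov M u.
  by move=> u h; move: (H u); rewrite h andbT negbK.
set e' := del_edge e x y.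
have irr' : irreflexive e' by move=> u; rewrite /e' /del_edge eirr.
have e'e : forall a b, e' a b -> e a b by move=> a b /andP[].
set M' := M :\ [set x; y].
have mM' : maximal_matching [set: T] e' M'.
  apply/(maximalP _ irr'); split.
    apply: (matching_transfer (matchingD _ mtM)) => s; rewrite in_setD1 => /andP[sv sM'].
    case/is_edgeP: (matching_edge mtM sM') => a [b [Es [ab _ _ eab]]].
    rewrite Es; apply: is_edgeI; rewrite ?inE //.
    rewrite /e' /del_edge eab /=; apply/negP=> /orP[]/andP[/eqP ax /eqP bx].
      by move: sv; rewrite Es ax bx eqxx.
    by move: sv; rewrite Es ax bx setUC eqxx.
  move=> a b _ _ /andP[eab hab].
  rewrite !(covD _ mtM sM) !in_set2.
  have ab : a != b by apply: contraTneq eab => ->; rewrite eirr.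
  case: (a =P x) => [ax|/eqP ax].
    have bx : b != x by rewrite -ax eq_sym.
    have by' : b != y by apply: contraNneq hab => ->; rewrite ax !eqxx.
    by rewrite (negbTE bx) (negbTE by') (Hx b) ?orbT // -ax eab.
  case: (a =P y) => [ay|/eqP ay].
    have bx : b != x by apply: contraNneq hab => ->; rewrite ay !eqxx orbT.
    have by' : b != y by rewrite -ay eq_sym.
    by rewrite (negbTE bx) (negbTE by') (Hx b) ?orbT // -ay eab orbT.
  rewrite /=.
  case: (b =P x) => [bx|/eqP bx].
    by rewrite (Hx a) // -bx esym eab.
  case: (b =P y) => [bY|/eqP bY].
    by rewrite (Hx a) // -bY [e b a]esym eab orbT.
  by rewrite !andbT; apply: mx_cov.
have exz' : e' x z.
  rewrite /e' /del_edge exz /= negb_or !negb_and zy orbT /=.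
  by rewrite xy.
have m0 : matching [set: T] e' ([set x; z] |: set0).
  apply: matchingU; rewrite ?inE //.
  - by apply/andP; split; apply/forall_inP=> s; rewrite inE.
  - by apply: contraTneq exz' => ->; rewrite irr'.
  - by apply/covP; case=> s; rewrite inE.
  - by apply/covP; case=> s; rewrite inE.
have [P [mP sP]] := extend m0.
have xzP : [set x; z] \in P by apply: (subsetP sP); rewrite setU11.
have mtP : matching [set: T] e' P by case/andP: mP.
have mPG : mx P.
  apply/(maximalP _ eirr); split.
    apply: (matching_transfer mtP) => s sP'.
    case/is_edgeP: (matching_edge mtP sP') => a [b [-> [ab _ _ eab]]].
    by apply: is_edgeI; rewrite ?inE // e'e.
  move=> a b _ _ eab.
  case hab : (e' a b); first by case/(maximalP _ irr'): mP => _ H'; apply: H'; rewrite ?inE.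
  move: hab; rewrite /e' /del_edge eab /= => /negbFE/orP[]/andP[/eqP -> /eqP ->].
    by rewrite (proj1 (andP (cov_edge xzP))).
  by rewrite (proj1 (andP (cov_edge xzP))) orbT.
have := EMe x y exy M' P mM' mP; rewrite -(mx_size mM mPG) (cardD2 sM).
by move=> E; exfalso; exact: (n_Sn _ E).
Qed.

End Main.


Section Fwd.
Variables (T : finType) (e : rel T).
Hypothesis esym : symmetric e.
Hypothesis eirr : irreflexive e.
Hypothesis EM : equimatchable [set: T] e.
Implicit Types (M N : {set {set T}}) (s : {set T}).
Local Notation mx := (maximal_matching [set: T] e).
Local Notation mt := (matching [set: T] e).
Local Notation Dv := (Dv e).

Definition Dvb v := [exists M, mx M && ~~ cov M v].
Lemma DvP v : reflect (Dv v) (Dvb v).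
Proof.
apply: (iffP existsP) => [[M /andP[h1 h2]]|[M [h1 h2]]]; exists M => //.
by rewrite h1 h2.
Qed.

Lemma closed_all (conn : connected [set: T] e) (S : pred T) u :
  (forall p r, S p -> e p r -> S r) -> S u -> forall x, S x.
Proof.
move=> H Su x; have /connectP[p pth ->] := conn u x (in_setT u) (in_setT x).
elim: p u Su pth => [|y p IH] u Su //= /andP[/and3P[_ _ euy] pth].
exact: (IH y (H u y Su euy) pth).
Qed.

Lemma swap_keep M x y z s : s \in M -> s != [set x; y] ->
  s \in [set x; z] |: (M :\ [set x; y]).
Proof. by move=> sM sxy; rewrite in_setU1 in_setD1 sxy sM orbT. Qed.

Lemma swap_new M x y z : [set x; z] \in [set x; z] |: (M :\ [set x; y]).
Proof. exact: setU11. Qed.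

Lemma neq_set2 (r r' : T) (S : {set T}) : r \notin S -> [set r; r'] != S.
Proof. by apply: contraNneq => <-; rewrite set21. Qed.

Lemma factb M x y : mx M -> [set x; y] \in M -> ~ Dv x -> forall t, e y t -> cov M t.
Proof.
move=> mM sM nD t eyt; apply: contraT => ct; exfalso; apply: nD.
by apply: (Dv_swap esym EM mM _ eyt ct); rewrite setUC.
Qed.

Section WithV.
Hypothesis EMv : forall v, equimatchable ([set: T] :\ v) e.

Lemma La M p q : mx M -> [set p; q] \in M -> Dv p -> Dv q ->
  exists a, [/\ ~~ cov M a, e p a, e q a &
     forall c, ~~ cov M c -> e p c || e q c -> c = a].
Proof.
move=> mM sM Dp Dq.
have [a [ca eqa]] := L2 esym eirr EM EMv Dp mM sM.
have sM' : [set q; p] \in M by rewrite setUC.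
have [b [cb epb]] := L2 esym eirr EM EMv Dq mM sM'.
have ba := L1 esym eirr EM mM sM cb ca epb eqa.
exists a; split => //; first by rewrite -ba.
move=> c cc /orP[epc|eqc].
  by rewrite (L1 esym eirr EM mM sM cc ca epc eqa).
by rewrite -(L1 esym eirr EM mM sM cb cc epb eqc) ba.
Qed.


Lemma LX M p q r r' : mx M -> [set p; q] \in M -> Dv p -> Dv q ->
  [set r; r'] \in M -> ~ Dv r -> e r p -> False.
Proof.
move=> mM sM Dp Dq srM nD erp.
have mtM := mx_mt mM.
have [a [ca epa eqa ua]] := La mM sM Dp Dq.
have sqp : [set q; p] \in M by rewrite setUC.
have [mM1 cf1] := swap esym EM mM sqp eqa ca.
have rq : r != q by apply/eqP=> E; apply: nD; rewrite E.
have rp : r != p by apply/eqP=> E; apply: nD; rewrite E.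
have rqp : r \notin [set q; p] by rewrite in_set2 negb_or rq rp.
have srM1 := swap_keep a srM (neq_set2 r' rqp).
have /andP[cpM cqM] := cov_edge sM.
have cp1 : ~~ cov ([set q; a] |: (M :\ [set q; p])) p.
  rewrite cf1 eqxx andbF orbF; by apply: contraNneq ca => <-.
have [mM2 cf2] := swap esym EM mM1 srM1 erp cp1.
have qr' : q != r'.
  apply/eqP=> E; have : [set q; r] \in M by rewrite E setUC.
  by move/(partner_uniq esym mtM sqp) => E2; move: rp; rewrite E2 eqxx.
have sqa2 : [set q; a] \in [set r; p] |: (([set q; a] |: (M :\ [set q; p])) :\ [set r; r']).
  apply: swap_keep; first exact: swap_new.
  by apply: neq_set2; rewrite in_set2 negb_or eq_sym rq qr'.
have Da := Dv_unc mM ca.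
have [b [cb eqb eab ub]] := La mM2 sqa2 Dq Da.
move: cb; rewrite cf2 negb_or => /andP[bp]; rewrite negb_and negbK.
case: (b =P r') => [br' _|/eqP br'].
  have := factb mM srM nD (_ : e r' a); rewrite -br' esym eab => /(_ isT).
  by rewrite (negbTE ca).
rewrite orbF cf1 negb_or negb_and bp orbF => /andP[ba cbM].
by move: ba; rewrite (ua b cbM) ?eqb ?orbT ?eqxx.
Qed.

Lemma LY M p q r r' : mx M -> [set p; q] \in M -> Dv p -> Dv q ->
  [set r; r'] \in M -> ~ Dv r' -> e r p -> False.
Proof.
move=> mM sM Dp Dq srM nD erp.
have [a [ca epa eqa ua]] := La mM sM Dp Dq.
have sqp : [set q; p] \in M by rewrite setUC.
have [mM1 cf1] := swap esym EM mM sqp eqa ca.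
have r'q : r' != q by apply/eqP=> E; apply: nD; rewrite E.
have r'p : r' != p by apply/eqP=> E; apply: nD; rewrite E.
have sr'M : [set r'; r] \in M by rewrite setUC.
have rqp : r' \notin [set q; p] by rewrite in_set2 negb_or r'q r'p.
have srM1 := swap_keep a sr'M (neq_set2 r rqp).
have /andP[cpM cqM] := cov_edge sM.
have := factb mM1 srM1 nD erp.
rewrite cf1 eqxx andbF orbF => /eqP pa.
by move: ca; rewrite -pa cpM.
Qed.


Hypothesis conn : connected [set: T] e.

Lemma Dedge_allD u v : Dv u -> Dv v -> e u v -> forall x, Dv x.
Proof.
move=> Du Dv' euv.
have uv : u != v by apply: contraTneq euv => ->; rewrite eirr.
have m0 : mt ([set u; v] |: set0).
  apply: matchingU; rewrite ?inE //.
  - by apply/andP; split; apply/forall_inP=> s; rewrite inE.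
  - by apply/covP; case=> s; rewrite inE.
  - by apply/covP; case=> s; rewrite inE.
have [M [mM sub]] := extend m0.
have suv : [set u; v] \in M by apply: (subsetP sub); rewrite setU11.
have mtM := mx_mt mM.
pose S := fun p => [exists p1, exists q1, [&& [set p1; q1] \in M, Dvb p1, Dvb q1 &
   (p == p1) || (~~ cov M p && e p1 p)]].
have mkS : forall r p1 q1, [set p1; q1] \in M -> Dv p1 -> Dv q1 ->
    (r == p1) || (~~ cov M r && e p1 r) -> S r.
  move=> r p1 q1 h1 /DvP h2 /DvP h3 h4; apply/existsP; exists p1; apply/existsP; exists q1.
  by rewrite h1 h2 h3 h4.
have SD : forall p, S p -> Dv p.
  move=> p /existsP[p1 /existsP[q1 /and4P[_ /DvP D1 _ /orP[/eqP->|/andP[cp _]]]]] //.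
  exact: Dv_unc mM cp.
suff HS : forall x, S x by move=> x; apply: SD.
apply: (closed_all conn (u := u)); last by apply: (mkS u u v) => //; rewrite eqxx.
move=> p r /existsP[p1 /existsP[q1 /and4P[s1 /DvP D1 /DvP D2 /orP[/eqP Ep|/andP[cp ep]]]]] epr.
  subst p; case: (boolP (cov M r)) => cr; last first.
    by apply: (mkS r p1 q1) => //; rewrite cr epr orbT.
  have [r' srM] := partner mtM cr.
  case: (DvP r) => Dr; last first.
    by case: (LX mM s1 D1 D2 srM Dr); rewrite esym.
  case: (DvP r') => Dr'; first by apply: (mkS r r r') => //; rewrite eqxx.
  by case: (LY mM s1 D1 D2 srM Dr'); rewrite esym.
have cr : cov M r.
  by apply: contraT => cr; case: (aug eirr mM cp cr epr).
have [r' srM] := partner mtM cr.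
case: (DvP r) => Dr.
  case: (DvP r') => Dr'; first by apply: (mkS r r r') => //; rewrite eqxx.
  have sr'M : [set r'; r] \in M by rewrite setUC.
  have erp : e r p by rewrite esym.
  by move: (factb mM sr'M Dr' erp); rewrite (negbTE cp).
have [mM1 cf1] := swap esym EM mM s1 ep cp.
have rp1 : r != p1 by apply/eqP=> E; apply: Dr; rewrite E.
have rq1 : r != q1 by apply/eqP=> E; apply: Dr; rewrite E.
have rS : r \notin [set p1; q1] by rewrite in_set2 negb_or rp1 rq1.
have srM1 := swap_keep p srM (neq_set2 r' rS).
have spp1 : [set p; p1] \in [set p1; p] |: (M :\ [set p1; q1]) by rewrite setUC swap_new.
by case: (LX mM1 spp1 (Dv_unc mM cp) D1 srM1 Dr (_ : e r p)); rewrite esym.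
Qed.


Lemma star (allD : forall x, Dv x) w : exists M, [/\ mx M, ~~ cov M w &
  forall p, p != w -> cov M p && e p w].
Proof.
have [M [mM cw]] := allD w.
have mtM := mx_mt mM.
exists M; split=> //.
pose S := fun p => (p == w) || (cov M p && e p w).
suff HS : forall x, S x.
  by move=> p pw; move: (HS p); rewrite /S (negbTE pw).
apply: (closed_all conn (u := w)); last by rewrite /S eqxx.
move=> p r /orP[/eqP->|/andP[cp epw]] epr.
  have cr : cov M r by apply: contraT => cr; case: (aug eirr mM cw cr epr).
  by rewrite /S cr esym epr orbT.
have [q sM] := partner mtM cp.
have [a [ca epa eqa ua]] := La mM sM (allD p) (allD q).
have wa : w = a by apply: ua; rewrite ?epw.
subst a.
rewrite /S; case: (r =P w) => //= /eqP rw.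
case: (boolP (cov M r)) => cr /=; last by move: rw; rewrite (ua r cr) ?epr ?eqxx.
case: (r =P q) => [->|/eqP rq]; first by rewrite eqa; have /andP[] := cov_edge sM.
have [r' srM] := partner mtM cr.
have [a' [ca' era' er'a' ua']] := La mM srM (allD r) (allD r').
case: (a' =P w) => [<-//|/eqP a'w].
exfalso.
have sqp : [set q; p] \in M by rewrite setUC.
have [mM1 cf1] := swap esym EM mM sqp eqa cw.
have rp : r != p by apply: contraTneq epr => ->; rewrite eirr.
have rS : r \notin [set q; p] by rewrite in_set2 negb_or rq rp.
have srM1 := swap_keep w srM (neq_set2 r' rS).
have cp1 : ~~ cov ([set q; w] |: (M :\ [set q; p])) p.
  rewrite cf1 eqxx andbF orbF; by apply: contraNneq cw => <-.
have erp : e r p by rewrite esym.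
have [mM2 cf2] := swap esym EM mM1 srM1 erp cp1.
apply: (aug eirr mM2 _ _ er'a').
  rewrite cf2 eqxx andbF orbF; apply/eqP=> E.
  have : [set p; r] \in M by rewrite -E setUC.
  by move/(partner_uniq esym mtM sM) => E2; move: rq; rewrite E2 eqxx.
rewrite cf2 cf1 (negbTE a'w) (negbTE ca') /=.
by rewrite orbF; apply: contraNneq ca' => ->.
Qed.

Lemma allD_Kodd (allD : forall x, Dv x) (w0 : T) : complete_odd [set: T] e.
Proof.
split.
  have [M [mM cw H]] := star allD w0.
  have E : ~: cover M = [set w0].
    apply/setP=> x; rewrite !inE cover_cov; case: (x =P w0) => [->|/eqP xw] //.
    by move: (H x xw) => /andP[->].
  have := cardsC (cover M); rewrite E cards1 cardsT (card_cover (mx_mt mM)) => <-.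
  by rewrite oddD oddM andbF.
move=> x y _ _ xy.
have [M [mM cw H]] := star allD y.
by case/andP: (H x xy).
Qed.


Hypothesis EMe : forall x y, e x y -> equimatchable [set: T] (del_edge e x y).

Lemma forward : complete_odd [set: T] e \/ bipartite [set: T] e.
Proof.
case: (boolP [exists u, exists v, [&& Dvb u, Dvb v & e u v]]).
  case/existsP=> u /existsP[v /and3P[/DvP Du /DvP Dv' euv]].
  by left; apply: (allD_Kodd (Dedge_allD Du Dv' euv) u).
move/existsPn=> noD; right.
have noD' : forall u v, Dvb u -> Dvb v -> ~~ e u v.
  move=> u v h1 h2; move/existsPn: (noD u) => /(_ v); by rewrite h1 h2.
case: (boolP [exists x, exists y, [&& ~~ Dvb x, ~~ Dvb y & e x y]]); last first.
  move/existsPn=> noA.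
  exists [set v | Dvb v]; split; first exact: subsetT.
  move=> a b _ _ eab; rewrite !inE.
  case: (boolP (Dvb a)) => Da; case: (boolP (Dvb b)) => Db //.
    by move: (noD' a b Da Db); rewrite eab.
  by move/existsPn: (noA a) => /(_ b); rewrite Da Db eab.
case/existsP=> x /existsP[y /and3P[/DvP nDx /DvP nDy exy]].
have xy : x != y by apply: contraTneq exy => ->; rewrite eirr.
have m0 : mt ([set x; y] |: set0).
  apply: matchingU; rewrite ?inE //.
  - by apply/andP; split; apply/forall_inP=> s; rewrite inE.
  - by apply/covP; case=> s; rewrite inE.
  - by apply/covP; case=> s; rewrite inE.
have [M [mM sub]] := extend m0.
have sxy : [set x; y] \in M by apply: (subsetP sub); rewrite setU11.
have syx : [set y; x] \in M by rewrite setUC.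
have Hx : forall z, e x z -> z = y.
  move=> z exz; apply/eqP; apply: contraT => zy.
  have [u [cu h]] := L3 esym eirr EM EMe mM sxy zy exz.
  case/orP: h => h.
    by case: nDy; apply: (Dv_swap esym EM mM sxy h cu).
  by case: nDx; apply: (Dv_swap esym EM mM syx h cu).
have Hy : forall z, e y z -> z = x.
  move=> z eyz; apply/eqP; apply: contraT => zx.
  have [u [cu h]] := L3 esym eirr EM EMe mM syx zx eyz.
  case/orP: h => h.
    by case: nDx; apply: (Dv_swap esym EM mM syx h cu).
  by case: nDy; apply: (Dv_swap esym EM mM sxy h cu).
have all2 : forall p, (p == x) || (p == y).
  apply: (closed_all conn (u := x)); last by rewrite eqxx.
  by move=> p r /orP[]/eqP-> h; [rewrite (Hx r h) eqxx orbT|rewrite (Hy r h) eqxx].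
exists [set x]; split; first exact: subsetT.
move=> a b _ _ eab; rewrite !inE.
have ab : a != b by apply: contraTneq eab => ->; rewrite eirr.
move: (all2 a) (all2 b) ab => /orP[]/eqP-> /orP[]/eqP->; rewrite ?eqxx //.
  by move=> _; rewrite [y == x]eq_sym (negbTE xy).
by move=> _; rewrite [y == x]eq_sym (negbTE xy).
Qed.

End WithV.
End Fwd.


Lemma count_unc (T : finType) (V : {set T}) (e : rel T) M : matching V e M ->
  #|V| = #|M| * 2 + #|V :\: cover M|.
Proof.
move=> mM; rewrite -(card_cover mM) -(cardsID (cover M) V).
by rewrite (setIidPr (cover_sub mM)).
Qed.

Lemma unc_indep (T : finType) (V : {set T}) (e : rel T) (irr : irreflexive e) M :
  maximal_matching V e M -> forall a b, a \in V :\: cover M -> b \in V :\: cover M -> ~~ e a b.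
Proof.
case/(maximalP _ irr)=> _ H a b; rewrite !inE !cover_cov => /andP[ca aV] /andP[cb bV].
by apply/negP=> eab; move: (H a b aV bV eab); rewrite (negbTE ca) (negbTE cb).
Qed.

Section Kodd.
Variables (T : finType) (e : rel T).
Hypothesis esym : symmetric e.
Hypothesis eirr : irreflexive e.
Hypothesis Ko : complete_odd [set: T] e.

Lemma Kodd_vertex v : equimatchable ([set: T] :\ v) e.
Proof.
case: Ko => oddT comp.
have key : forall M, maximal_matching ([set: T] :\ v) e M -> #|[set: T] :\ v| = #|M| * 2.
  move=> M mM; have mtM : matching ([set: T] :\ v) e M by case/andP: mM.
  have E0 := count_unc mtM.
  have le1 : #|([set: T] :\ v) :\: cover M| <= 1.
    apply/card_le1_eqP=> a b ha hb; apply/eqP; apply: contraT => ab.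
    by have := unc_indep eirr mM ha hb; rewrite comp ?inE // eq_sym.
  have ev : ~~ odd #|[set: T] :\ v|.
    by move: oddT; rewrite (cardsD1 v) inE /=.
  move: le1; rewrite leq_eqVlt ltnS leqn0 => /orP[]/eqP E1; last by rewrite E0 E1 addn0.
  by move: ev; rewrite E0 E1 oddD oddM andbF.
move=> M N mM mN; have := key M mM; rewrite (key N mN).
by move/eqP; rewrite eqn_mul2r /= => /eqP.
Qed.


Lemma Kodd_edge x y : e x y -> equimatchable [set: T] (del_edge e x y).
Proof.
case: Ko => oddT comp exy.
set e' := del_edge e x y.
have irr' : irreflexive e' by move=> u; rewrite /e' /del_edge eirr.
have key : forall M, maximal_matching [set: T] e' M -> #|[set: T]| = #|M| * 2 + 1.
  move=> M mM; have mtM : matching [set: T] e' M by case/andP: mM.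
  have E0 := count_unc mtM.
  set U := [set: T] :\: cover M in E0.
  have pairs : forall a b, a \in U -> b \in U -> a != b ->
      ((a == x) && (b == y)) || ((a == y) && (b == x)).
    move=> a b ha hb ab; have := unc_indep irr' mM ha hb.
    by rewrite /e' /del_edge comp ?inE // negb_and negbK.
  have le2 : #|U| <= 2.
    case: (set_0Vmem U) => [->|[a aU]]; first by rewrite cards0.
    rewrite (cardsD1 a) aU add1n ltnS.
    apply/card_le1_eqP=> b c; rewrite !in_setD1 => /andP[ba bU] /andP[ca cU].
    have xy : x != y by apply: contraTneq exy => ->; rewrite eirr.
    have ab : a != b by rewrite eq_sym.
    have ac : a != c by rewrite eq_sym.
    move: (pairs a b aU bU ab) (pairs a c aU cU ac).
    case: (a =P x) => [ax|/eqP ax]; first subst a.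
      by rewrite (negbTE xy) /= !orbF => /eqP-> /eqP->.
    rewrite /=.
    by move=> /andP[_ /eqP->] /andP[_ /eqP->].
  have oddU : odd #|U|.
    by move: oddT; rewrite E0 oddD oddM andbF.
  move: le2 oddU; rewrite E0 addnC; case: #|U| => [|[|[|//]]] // _ _; exact: addnC.
move=> M N mM mN; have := key M mM; rewrite (key N mN).
by move/eqP; rewrite eqn_add2r eqn_mul2r /= => /eqP.
Qed.

End Kodd.

Lemma neq_set2' (T : finType) (y a b t : T) : y \notin [set a; b] -> [set a; b] != [set y; t].
Proof. by apply: contraNneq => ->; rewrite set21. Qed.

Section Bip.
Variables (T : finType) (e : rel T).
Hypothesis esym : symmetric e.
Hypothesis eirr : irreflexive e.
Hypothesis EM : equimatchable [set: T] e.
Variable A : {set T}.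
Hypothesis Abip : forall x y, e x y -> (x \in A) != (y \in A).
Implicit Types (M N : {set {set T}}) (s : {set T}).
Local Notation mx := (maximal_matching [set: T] e).
Local Notation mt := (matching [set: T] e).

Definition R M : rel T := fun x y =>
  if x \in A then [&& y \notin A, e x y & [set x; y] \notin M]
  else (y \in A) && ([set x; y] \in M).

Lemma C1 M : mx M -> forall N w, mx N -> ~~ cov N w -> w \notin A ->
  exists u, [/\ ~~ cov M u, u \notin A & connect (R M) w u].
Proof.
move=> mM N w; move: {2}#|M :\: N| (leqnn #|M :\: N|) => n.
have mtM := mx_mt mM.
elim: n N w => [|n IH] N w Hn mN cNw wA.
all: case: (boolP (cov M w)) => cMw; last by exists w; split; rewrite ?connect0.
all: have [x1 sM] := partner mtM cMw.
all: have [ewx1 wx1] := edge_in esym mtM sM.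
all: have x1A : x1 \in A by move: (Abip ewx1); rewrite (negbTE wA); case: (x1 \in A).
all: have cx1 : cov N x1 by apply: contraT => cx; case: (aug eirr mN cNw cx ewx1).
all: have [y2 sN] := partner (mx_mt mN) cx1.
all: have [ex1y2 x1y2] := edge_in esym (mx_mt mN) sN.
all: have y2w : y2 != w by apply: contraNneq cNw => <-; have /andP[] := cov_edge sN.
all: have wN : [set w; x1] \notin N by apply: notcov_notin.
all: have wMN : [set w; x1] \in M :\: N by rewrite inE wN sM.
- have : #|M :\: N| > 0 by apply/card_gt0P; exists [set w; x1].
  by rewrite lt0n -leqn0 Hn.
have y2A : y2 \notin A by move: (Abip ex1y2); rewrite x1A; case: (y2 \in A).
have x1y2M : [set x1; y2] \notin M.
  apply/negP=> h; have sM' : [set x1; w] \in M by rewrite setUC.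
  by move: y2w; rewrite (partner_uniq esym mtM h sM') eqxx.
have ex1w : e x1 w by rewrite esym.
have [mN' cf] := swap esym EM mN sN ex1w cNw.
set N' := [set x1; w] |: (N :\ [set x1; y2]) in mN' cf.
have cy2 : ~~ cov N' y2 by rewrite cf eqxx andbF orbF.
have Hn' : #|M :\: N'| <= n.
  rewrite -ltnS; apply: leq_trans Hn; apply: proper_card; apply/properP; split.
    apply/subsetP=> s; rewrite !inE => /andP[sN' sM'']; rewrite sM'' andbT.
    apply: contra sN' => sN''; rewrite sN'' andbT.
    by apply/orP; right; apply: contraNneq x1y2M => <-.
  by exists [set w; x1] => //; rewrite !inE [[set w; x1]]setUC eqxx.
have [u [cu uA cn]] := IH N' y2 Hn' mN' cy2 y2A.
exists u; split=> //.
apply: connect_trans cn; apply: connect_trans (connect1 (_ : R M x1 y2)).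
  by apply: connect1; rewrite /R (negbTE wA) x1A.
by rewrite /R x1A y2A ex1y2 x1y2M.
Qed.


Lemma C2 M v p : mx M -> v \in A -> ~~ cov M v -> path (R M) v p -> uniq (v :: p) ->
  ~~ cov M (last v p) -> last v p \notin A -> False.
Proof.
move: {2}(size p) (leqnn (size p)) => n.
elim: n M v p => [|n IH] M v p Hs mM vA cv pth up cl lA.
  by case: p Hs pth up cl lA => //= _ _ _ _; rewrite vA.
have mtM := mx_mt mM.
case: p Hs pth up cl lA => [|y [|x' p]] /=; first by rewrite vA.
  rewrite andbT /R vA => _ /and3P[_ evy _] _ cy _.
  by case: (aug eirr mM cv cy evy).
move=> Hs /and3P[Rvy Ryx' pth] up cl lA.
move: Rvy; rewrite /R vA => /and3P[yA evy vyM].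
case: (boolP (cov M y)) => cy; last by case: (aug eirr mM cv cy evy).
have [x sM] := partner mtM cy.
move: Ryx'; rewrite /R (negbTE yA) => /andP[x'A syx'].
have xx' := partner_uniq esym mtM sM syx'; subst x'.
have eyv : e y v by rewrite esym.
have [mM' cf] := swap esym EM mM sM eyv cv.
set M' := [set y; v] |: (M :\ [set y; x]) in mM' cf.
have /andP[_ cx] := cov_edge sM.
have xv : x != v by apply: contraNneq cv => <-.
have cx' : ~~ cov M' x by rewrite cf (negbTE xv) eqxx andbF.
have memM' : forall a b, a != y -> b != y -> ([set a; b] \in M') = ([set a; b] \in M).
  move=> a b ay bY; rewrite /M' in_setU1 in_setD1.
  have h : forall t, [set a; b] != [set y; t].
    by move=> t; apply: neq_set2'; rewrite in_set2 negb_or eq_sym ay eq_sym bY.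
  by rewrite (negbTE (h v)) (h x).
move: up; rewrite /= !inE !negb_or => /and3P[/and3P[vy vx vp] /andP[yx yp] up].
have pth' : path (R M') x p.
  apply: (sub_in_path (P := [pred u | u != y])); last exact: pth.
    by move=> a b ay bY; rewrite /R memM'.
  rewrite /= eq_sym yx /=; apply/allP=> u up'; rewrite inE.
  by apply: contraNneq yp => <-.
have lp : last x p \in x :: p by exact: mem_last.
have cl' : ~~ cov M' (last x p).
  rewrite cf negb_or negb_and cl /= andbT.
  apply: contraNneq vp => E; move: lp; rewrite inE; case/orP=> [/eqP lx|h]; [by move: xv; rewrite -lx E eqxx | by rewrite -E].
have Hs' : size p <= n by apply: ltnW.
exact: (IH M' x p Hs' mM' x'A cx' pth' up cl' lA).
Qed.


Lemma B3' v w : v \in A -> Dv e v -> Dv e w -> e v w -> False.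
Proof.
move=> vA [M [mM cMv]] [N [mN cNw]] evw.
have wA : w \notin A by move: (Abip evw); rewrite vA; case: (w \in A).
have [u [cu uA cn]] := C1 mM mN cNw wA.
have Rvw : R M v w by rewrite /R vA wA evw (notcov_notin w cMv).
have /connectP[p pth ul] := connect_trans (connect1 Rvw) cn.
move: cu uA; rewrite ul; case: (shortenP pth) => p' pth' up _ cu uA.
exact: (C2 mM vA cMv pth' up cu uA).
Qed.

Lemma B3 v w : Dv e v -> Dv e w -> e v w -> False.
Proof.
move=> Dv1 Dw evw; case: (boolP (v \in A)) => vA; first exact: (B3' vA Dv1 Dw evw).
have wA : w \in A by move: (Abip evw); rewrite (negbTE vA); case: (w \in A).
by apply: (B3' wA Dw Dv1); rewrite esym.
Qed.


Lemma notcov_v v M : matching ([set: T] :\ v) e M -> ~~ cov M v.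
Proof.
move=> mtV; apply/covP=> -[s sM vs].
case/is_edgeP: (matching_edge mtV sM) => a [b [E [_ aV bV _]]].
by move: vs aV bV; rewrite E => /set2P[]->; rewrite !inE eqxx.
Qed.

Lemma cls v M : maximal_matching ([set: T] :\ v) e M ->
  (mx M /\ ~~ cov M v) \/
  (exists w, [/\ e v w, ~~ cov M w, mx ([set v; w] |: M) &
      forall t, e w t -> t != v -> cov M t]).
Proof.
move=> mV; case/(maximalP _ eirr): (mV) => mtV HV.
have vnot : forall s, s \in M -> v \notin s.
  move=> s /(matching_edge mtV)/is_edgeP[a [b [-> [_ aV bV _]]]].
  by rewrite in_set2 negb_or; move: aV bV; rewrite !inE !andbT eq_sym => -> ; rewrite eq_sym.
have cv : ~~ cov M v by apply/covP=> -[s sM vs]; move: (vnot s sM); rewrite vs.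
have mtM : mt M.
  apply: (matching_transfer mtV) => s /(matching_edge mtV)/is_edgeP[a [b [-> [ab _ _ eab]]]].
  by apply: is_edgeI; rewrite ?inE.
have inV : forall a, a != v -> a \in [set: T] :\ v by move=> a av; rewrite !inE av.
case: (boolP [exists w, e v w && ~~ cov M w]).
  case/existsP=> w /andP[evw cw]; right; exists w.
  have vw : v != w by apply: contraTneq evw => ->; rewrite eirr.
  have wv : w != v by rewrite eq_sym.
  split=> //.
    apply/(maximalP _ eirr); split; first by apply: matchingU; rewrite ?inE.
    move=> a b _ _ eab; rewrite !covU !in_set2.
    case: (a =P v) => [_|/eqP av] //; case: (b =P v) => [_|/eqP bv]; rewrite ?orbT //=.
    by case/orP: (HV a b (inV a av) (inV b bv) eab) => ->; rewrite ?orbT.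
  move=> t ewt tv; apply: contraT => ct.
  by move: (HV w t (inV w wv) (inV t tv) ewt); rewrite (negbTE cw) (negbTE ct).
move/existsPn=> H; left; split=> //.
apply/(maximalP _ eirr); split=> // a b _ _ eab.
have Hc : forall c, e v c -> cov M c by move=> c evc; move: (H c); rewrite evc /= negbK.
case: (a =P v) => [av|/eqP av]; first by rewrite (Hc b) ?orbT // -av.
case: (b =P v) => [bv|/eqP bv]; first by rewrite (Hc a) // -bv esym.
exact: HV (inV a av) (inV b bv) eab.
Qed.

Lemma bip_vertex (EMe : forall x y, e x y -> equimatchable [set: T] (del_edge e x y)) v :
  equimatchable ([set: T] :\ v) e.
Proof.
have mixed : forall M1 M2, maximal_matching ([set: T] :\ v) e M1 ->
    maximal_matching ([set: T] :\ v) e M2 -> mx M1 -> ~~ cov M1 v ->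
    forall w, e v w -> ~~ cov M2 w -> mx ([set v; w] |: M2) ->
    (forall t, e w t -> t != v -> cov M2 t) -> False.
  move=> M1 M2 _ _ mM1 cM1v w evw cw mP Ht.
  set P := [set v; w] |: M2 in mP.
  have sP : [set v; w] \in P by rewrite setU11.
  have sP' : [set w; v] \in P by rewrite setUC.
  have cwM1 : cov M1 w by move: (mx_cov eirr mM1 evw); rewrite (negbTE cM1v).
  have [t swt] := partner (mx_mt mM1) cwM1.
  have [ewt wt] := edge_in esym (mx_mt mM1) swt.
  have tv : t != v.
    by apply: contraNneq cM1v => <-; have /andP[] := cov_edge swt.
  have [u [cu h]] := L3 esym eirr EM EMe mP sP' tv ewt.
  have cPv : cov P v by rewrite covU set21.
  case/orP: h => h.
    have uv : u != v by apply: contraNneq cu => ->.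
    by move: cu; rewrite covU Ht ?orbT.
  have Dw := Dv_swap esym EM mP sP h cu.
  exact: (B3 (Dv_unc mM1 cM1v) Dw evw).
move=> M1 M2 m1 m2.
case: (cls m1) => [[mM1 c1]|[w1 [ev1 cw1 mP1 H1]]];
case: (cls m2) => [[mM2 c2]|[w2 [ev2 cw2 mP2 H2]]].
- exact: (mx_size EM mM1 mM2).
- by case: (mixed M1 M2 m1 m2 mM1 c1 w2 ev2 cw2 mP2 H2).
- by case: (mixed M2 M1 m2 m1 mM2 c2 w1 ev1 cw1 mP1 H1).
- have := mx_size EM mP1 mP2.
  have n1 := notcov_v (proj1 (andP m1)).
  have n2 := notcov_v (proj1 (andP m2)).
  by rewrite (cardU2 _ n1) (cardU2 _ n2); case.
Qed.

End Bip.

Unset Implicit Arguments.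

Theorem corollary8p1 (T : finType) (e : rel T) :
  simple_graph e ->
  connected [set: T] e ->
  equimatchable [set: T] e ->
  ((forall v : T, equimatchable ([set: T] :\ v) e) /\
   (forall x y : T, e x y -> equimatchable [set: T] (del_edge e x y)))
  <->
  (complete_odd [set: T] e \/
   (bipartite [set: T] e /\ edge_stable [set: T] e)).
Proof.
move=> [esym eirr] conn EM; split.
  case=> EMv EMe.
  case: (forward esym eirr EM EMv conn EMe) => [Ko|Bi]; first by left.
  right; split=> //; split=> // x y _ _ exy; exact: EMe.
case=> [Ko|[[A [_ Abip]] [_ EMe]]].
  split; [exact: Kodd_vertex | exact: Kodd_edge].
have EMe' : forall x y, e x y -> equimatchable [set: T] (del_edge e x y).
  by move=> x y; apply: EMe; rewrite inE.
split=> //.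
move=> v; apply: (bip_vertex esym eirr EM (A := A)) => //.
by move=> x y exy; apply: Abip; rewrite ?inE.
Qed.
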